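(* Let $(X,u)$ and $(Y,v)$ be Čech closure spaces, let $Y^X$ be the set of all continuous maps $(X,u)\to(Y,v)$, and let $\sigma$ be a Čech closure operator on $Y^X$. Then: (1) $\sigma$ is proper if and only if for every topological space $Z$ having at most one non-isolated point and every continuous $g:Z\times(X,u)\to(Y,v)$, the map $g^*:Z\to(Y^X,\sigma)$ is continuous; (2) $\sigma$ is admissible if and only if for every topological space $Z$ having at most one non-isolated point and every $g:Z\times X\to Y$ with $g^*(Z)\subset Y^X$ such that $g^*:Z\to(Y^X,\sigma)$ is continuous, the map $g:Z\times(X,u)\to(Y,v)$ is continuous.
   Context: A Čech closure space $(X,u)$ is a set $X$ with an operator $u:\mathcal P(X)\to\mathcal P(X)$ satisfying $u(\emptyset)=\emptyset$, $A\subset u(A)$, and $u(A\cup B)=u(A)\cup u(B)$. The interior is $\mathrm{int}_u A=X\setminus u(X\setminus A)$; $U$ is a neighbourhood of $x$ if $x\in\mathrm{int}_uU$. Topological spaces are regarded as closure spaces via their Kuratowski closure. A map $f:(X,u)\to(Y,v)$ is continuous if $f(u(A))\subset v(f(A))$ for all $A$. The product $(Z,w)\times(X,u)$ is $Z\times X$ with the closure operator for which the sets $W\times U$ ($W$ a neighbourhood of $z$, $U$ of $x$) form a neighbourhood base at $(z,x)$. For $g:Z\times X\to Y$, $g^*(z)(x)=g(z,x)$. A closure operator $\sigma$ on $Y^X$ is proper if for every closure space $(Z,w)$, continuity of $g:(Z,w)\times(X,u)\to(Y,v)$ implies continuity of $g^*:(Z,w)\to(Y^X,\sigma)$; it is admissible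 if for every closure space $(Z,w)$ and every $g:Z\times X\to Y$ with $g^*(Z)\subset Y^X$, continuity of $g^*:(Z,w)\to(Y^X,\sigma)$ implies continuity of $g$. *)

(* Defs.v *)
(* sets are [set T] = T -> Prop; topological spaces
   are mathcomp-analysis [topologicalType]s, viewed as closure spaces via
   their Kuratowski closure [closure]. *)
From mathcomp Require Import all_boot.
From mathcomp Require Import all_classical topology.
Set Implicit Arguments.
Unset Strict Implicit.
Unset Printing Implicit Defensive.
Local Open Scope classical_set_scope.

Record is_cech (X : Type) (u : set X -> set X) : Prop := {
  cech_set0 : u set0 = set0;
  cech_ext : forall A : set X, A `<=` u A;
  cech_setU : forall A B : set X, u (A `|` B) = u A `|` u B }.

Definition cint (X : Type) (u : set X -> set X) (A : set X) : set X :=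
  ~` u (~` A).
Definition cnbhs (X : Type) (u : set X -> set X) (x : X) (U : set X) : Prop :=
  cint u U x.

Definition ccont (X Y : Type) (u : set X -> set X) (v : set Y -> set Y)
  (f : X -> Y) : Prop :=
  forall A : set X, f @` (u A) `<=` v (f @` A).

(* product closure: the W x U (W nbhd of z, U nbhd of x) form a
   neighbourhood base at (z,x) *)
Definition cprod (Z X : Type) (w : set Z -> set Z) (u : set X -> set X)
  (A : set (Z * X)) : set (Z * X) :=
  fun p => forall (W : set Z) (U : set X), cnbhs w p.1 W -> cnbhs u p.2 U ->
    exists q, A q /\ W q.1 /\ U q.2.

Definition cfun (X Y : Type) (u : set X -> set X) (v : set Y -> set Y) :=
  {f : X -> Y | ccont u v f}.

(* g^* : Z -> Y^X, given as any h with val (h z) = g (z, .) ; such an h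
   exists iff g^*(Z) is contained in Y^X, and is then unique *)
Definition is_gstar (Z X Y : Type) (u : set X -> set X) (v : set Y -> set Y)
  (g : Z * X -> Y) (h : Z -> cfun u v) : Prop :=
  forall z, sval (h z) = fun x => g (z, x).

Definition proper_cl (X Y : Type) (u : set X -> set X) (v : set Y -> set Y)
  (sigma : set (cfun u v) -> set (cfun u v)) : Prop :=
  forall (Z : Type) (w : set Z -> set Z), is_cech w ->
  forall g : Z * X -> Y, ccont (cprod w u) v g ->
  exists h : Z -> cfun u v, is_gstar g h /\ ccont w sigma h.

Definition admissible_cl (X Y : Type) (u : set X -> set X) (v : set Y -> set Y)
  (sigma : set (cfun u v) -> set (cfun u v)) : Prop :=
  forall (Z : Type) (w : set Z -> set Z), is_cech w ->
  forall (g : Z * X -> Y) (h : Z -> cfun u v), is_gstar g h ->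
  ccont w sigma h -> ccont (cprod w u) v g.

Definition at_most_one_nonisolated (Z : topologicalType) : Prop :=
  forall a b : Z, ~ open [set a] -> ~ open [set b] -> a = b.

Definition proper_top1 (X Y : Type) (u : set X -> set X) (v : set Y -> set Y)
  (sigma : set (cfun u v) -> set (cfun u v)) : Prop :=
  forall Z : topologicalType, at_most_one_nonisolated Z ->
  forall g : Z * X -> Y, ccont (cprod (@closure Z) u) v g ->
  exists h : Z -> cfun u v, is_gstar g h /\ ccont (@closure Z) sigma h.

Definition admissible_top1 (X Y : Type) (u : set X -> set X) (v : set Y -> set Y)
  (sigma : set (cfun u v) -> set (cfun u v)) : Prop :=
  forall Z : topologicalType, at_most_one_nonisolated Z ->
  forall (g : Z * X -> Y) (h : Z -> cfun u v), is_gstar g h ->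
  ccont (@closure Z) sigma h -> ccont (cprod (@closure Z) u) v g.

(* Main.v *)
Require Import Defs.
From HB Require Import structures.
From mathcomp Require Import all_boot.
From mathcomp Require Import all_classical topology.
From Stdlib Require Import Classical.
Set Implicit Arguments.
Unset Strict Implicit.
Unset Printing Implicit Defensive.
Local Open Scope classical_set_scope.

Section Cech.
Variables (X : Type) (u : set X -> set X) (hu : is_cech u).

Lemma cech_mono (A B : set X) : A `<=` B -> u A `<=` u B.
Proof.
move=> AB x uAx.
have -> : B = A `|` B.
  by apply: funext => y; apply: propext; split; [right|case=> // /AB].
by rewrite (cech_setU hu); left.
Qed.

Lemma cint_sub (A : set X) : cint u A `<=` A.
Proof.
move=> x Hx; apply: NNPP => nA; apply: Hx; exact: (cech_ext hu) nA.
Qed.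

Lemma cint_mono (A B : set X) : A `<=` B -> cint u A `<=` cint u B.
Proof.
move=> AB x Hx H; apply: Hx; apply: cech_mono H => y nBy Ay; exact: nBy (AB _ Ay).
Qed.

Lemma cint_T x : cint u setT x.
Proof.
move=> H; have : u (~` setT) = set0.
  have -> : ~` (@setT X) = set0.
    by apply: funext => y; apply: propext; split => // /(_ I).
  exact: (cech_set0 hu).
by move=> E; rewrite E in H.
Qed.

Lemma cint_I (A B : set X) x : cint u A x -> cint u B x -> cint u (A `&` B) x.
Proof.
move=> HA HB H.
have E : ~` (A `&` B) = ~` A `|` ~` B.
  apply: funext => y; apply: propext; split.
    move=> nAB; case: (classic (A y)) => Ay; last by left.
    by right => By; apply: nAB.
  by case=> nY [Ay By]; apply: nY.
by rewrite E (cech_setU hu) in H; case: H.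
Qed.

Lemma cnbhs_meet (A W : set X) x : u A x -> cint u W x -> exists a, A a /\ W a.
Proof.
move=> uA HW; apply: NNPP => nex; apply: HW; apply: cech_mono uA => a Aa Wa.
by apply: nex; exists a.
Qed.

Lemma not_cl_nbhs (A : set X) x : ~ u A x -> cint u (~` A) x.
Proof.
move=> nA; rewrite /cint.
have -> : ~` ~` A = A.
  by apply: funext => y; apply: propext; split; [apply: NNPP|move=> ? ?].
done.
Qed.
End Cech.

Definition Zt (Z : Type) (w : set Z -> set Z) (hw : is_cech w) (z : Z) : Type := Z.

Section ZtDef.
Variables (Z : Type) (w : set Z -> set Z) (hw : is_cech w) (z : Z).

HB.instance Definition _ := gen_eqMixin (Zt hw z).
HB.instance Definition _ := gen_choiceMixin (Zt hw z).

Definition ztnbhs (p : Zt hw z) (N : set (Zt hw z)) : Prop :=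
  N p /\ (p = z -> cint w N z).

HB.instance Definition _ := hasNbhs.Build (Zt hw z) ztnbhs.

Lemma zt_filter (p : Zt hw z) : ProperFilter (ztnbhs p).
Proof.
split; first by case.
split.
- by split => // _; apply: cint_T.
- move=> A B [Ap HA] [Bp HB]; split; first by split.
  by move=> pz; apply: cint_I => //; [apply: HA|apply: HB].
- move=> P Q PQ [Pp HP]; split; first exact: PQ.
  by move=> pz; apply: cint_mono (HP pz).
Qed.

Lemma zt_singleton (p : Zt hw z) (A : set (Zt hw z)) : ztnbhs p A -> A p.
Proof. by case. Qed.

Lemma zt_nbhs (p : Zt hw z) (A : set (Zt hw z)) :
  ztnbhs p A -> ztnbhs p (ztnbhs^~ A).
Proof.
move=> [Ap HA]; split; first by split.
move=> pz; apply: (cint_mono hw) (HA pz) => q Aq; split => // qz.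
by apply: HA; rewrite -pz.
Qed.

HB.instance Definition _ := Nbhs_isNbhsTopological.Build (Zt hw z)
  zt_filter zt_singleton zt_nbhs.

End ZtDef.


Section Lemmas.
Variables (Z : Type) (w : set Z -> set Z) (hw : is_cech w) (z : Z).
Variables (X : Type) (u : set X -> set X) (hu : is_cech u).

Lemma zt_cl1 (A : set Z) : w A z -> @closure (Zt hw z) A z.
Proof.
move=> wA B [_ HB]; have [a [Aa Ba]] := cnbhs_meet hw wA (HB erefl).
by exists a.
Qed.

Lemma zt_cl2 (A : set Z) (p : Z) : @closure (Zt hw z) A p ->
  (p = z -> w A z) /\ (p <> z -> A p).
Proof.
move=> cl; split.
  move=> pz; apply: NNPP => nA.
  have H := not_cl_nbhs nA.
  have [q [Aq nAq]] : A `&` (~` A) !=set0.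
    apply: cl; split; last by move=> _; rewrite -pz in H; rewrite -pz.
    by rewrite pz; apply: (cint_sub hw) H.
  exact: nAq Aq.
move=> pnz.
have [q [Aq qp]] : A `&` [set p] !=set0.
  by apply: cl; split => // /pnz.
by rewrite -qp.
Qed.

Lemma top_cnbhs (T : topologicalType) (p : T) (N : set T) :
  nbhs p N -> cnbhs (@closure T) p N.
Proof. by move=> Np cl; have [q [nq Nq]] := cl N Np. Qed.

Lemma zt_prod1 (B : set (Z * X)) p :
  cprod (@closure (Zt hw z)) u B p -> cprod w u B p.
Proof.
case: p => z' x /= H W U HW HU.
case: (classic (z' = z)) => [E|nE].
  subst z'.
  have N1 : @ztnbhs _ _ hw z z W by split; [apply: (cint_sub hw) HW | move=> _].
  have [q [Bq [Wq Uq]]] := H W U (top_cnbhs (T:=Zt hw z) N1) HU.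
  by exists q.
have N1 : @ztnbhs _ _ hw z z' [set z'] by split => // /nE.
have [q [Bq [Wq Uq]]] := H [set z'] U (top_cnbhs (T:=Zt hw z) N1) HU.
exists q; split => //; split => //; rewrite Wq; exact: (cint_sub hw) HW.
Qed.

Lemma zt_prod2 (B : set (Z * X)) x :
  cprod w u B (z, x) -> cprod (@closure (Zt hw z)) u B (z, x).
Proof.
move=> /= H W U HW HU; apply: H HU.
move=> wW; apply: HW; exact: zt_cl1.
Qed.
Lemma zt_amo : at_most_one_nonisolated (Zt hw z).
Proof.
have op : forall a : Zt hw z, a <> z -> open [set a].
  move=> a az; rewrite openE => b -> /=; rewrite /interior.
  by split => // /az.
move=> a b na nb.
case: (classic (a = z)) => [->|az]; last by case: (na (op _ az)).
case: (classic (b = z)) => [->|bz] //; by case: (nb (op _ bz)).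
Qed.
End Lemmas.
Theorem corollary3 (X Y : Type) (u : set X -> set X) (v : set Y -> set Y)
  (hu : is_cech u) (hv : is_cech v)
  (sigma : set (cfun u v) -> set (cfun u v)) (hs : is_cech sigma) :
  (proper_cl sigma <-> proper_top1 sigma) /\
  (admissible_cl sigma <-> admissible_top1 sigma).
Proof.
have clcech : forall T : topologicalType, is_cech (@closure T).
  move=> T; split; [exact: closure0 | exact: subset_closure | exact: closureU].
have cfun_eq : forall a b : cfun u v, sval a = sval b -> a = b.
  move=> [a Ha] [b Hb] /= E; subst b; congr exist; exact: Prop_irrelevance.
split; split.
- move=> P T _ g Hg; exact: P (clcech T) g Hg.
- move=> P Z w hw g Hg.
  have hz : forall z, ccont u v (fun x => g (z, x)).
    move=> z A _ [x uAx <-].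
    have : cprod w u ((fun x => (z, x)) @` A) (z, x).
      move=> W U HW HU /=; have [a [Aa Ua]] := cnbhs_meet hu uAx HU.
      exists (z, a); split; first by exists a.
      by split => //; apply: (cint_sub hw) HW.
    move=> Hc; have := Hg _ (g (z, x)) (ex_intro2 _ _ _ Hc erefl).
    apply: (cech_mono hv) => y [q [a Aa <-] <-]; by exists a.
  pose h z : cfun u v := exist _ (fun x => g (z, x)) (hz z).
  exists h; split; first by [].
  move=> A _ [z0 wA <-].
  have [h' [Eh' Ch']] := P (Zt hw z0) (@zt_amo _ _ hw z0) g
    (fun B y '(ex_intro2 p Hp Ey) => Hg B y (ex_intro2 _ _ p (zt_prod1 Hp) Ey)).
  have E : h' = h by apply: funext => z; apply: cfun_eq; rewrite Eh'.
  rewrite -E; apply: Ch'; exists z0 => //; exact: zt_cl1.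
- move=> P T _ g h Eh Ch; exact: P (clcech T) g h Eh Ch.
- move=> P Z w hw g h Eh Ch B _ [[z x] HB <-].
  have Ch' : ccont (@closure (Zt hw z)) sigma h.
    move=> A _ [p clA <-]; have [H1 H2] := zt_cl2 clA.
    case: (classic (p = z)) => [pz|pnz].
      subst p; apply: Ch; exists z => //; exact: H1.
    apply: (cech_ext hs); exists p => //; exact: H2.
  apply: (P (Zt hw z) (@zt_amo _ _ hw z) g h Eh Ch').
  by exists (z, x) => //; apply: zt_prod2.
Qed.
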